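(* Let $(X,Y)$ be a conditionally dependent (CD) random vector with function $s$ on $(0,\infty)$. If $X$ is independent of $Y$, then $s(y)=1$ for all $y\in D_Y$. Conversely, $s(y)=1$ for all $y\in D_Y$ does not imply independence of $X$ and $Y$: there exist CD random vectors $(X,Y)$ with $s\equiv1$ on $D_Y$ for which $X$ and $Y$ are not independent.
   Context: $X$ is real-valued with distribution $F$ such that $\overline F(x)=1-F(x)>0$ for all $x\in\mathbb{R}$, and $Y$ takes values in $(0,\infty)$. Let $D_Y=\{y\in(0,\infty):\mathrm P(Y\in(y-\delta,y+\delta))>0\ \forall\delta>0\}$. For $x\in\mathbb{R}$ and $y\in D_Y$, $\mathrm P(X>x\mid Y=y)=\lim_{t\downarrow0}\mathrm P(X>x,Y\in[y,y+t))/\mathrm P(Y\in[y,y+t))$ when this limit exists. $(X,Y)$ is conditionally dependent (CD) with function $s$ if $s$ is a positive measurable function such that these conditional tails exist and $\lim_{x\to\infty}\sup_{y\in D_Y}|\mathrm P(X>x\mid Y=y)/(\overline F(x)s(y))-1|=0$. *)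

(* Defs.v *)
From HB Require Import structures.
From mathcomp Require Import all_boot all_order all_algebra.
From mathcomp Require Import all_classical all_reals all_analysis.
Set Implicit Arguments. Unset Strict Implicit. Unset Printing Implicit Defensive.
Import Order.TTheory GRing.Theory Num.Theory.
Import numFieldNormedType.Exports.
Local Open Scope classical_set_scope.
Local Open Scope ring_scope.

Section CD.
Context {R : realType} {d : measure_display} {T : measurableType d}.
Variable (P : probability T R).

Definition prob (A : set T) : R := fine (P A).

Definition tailF (X : T -> R) (x : R) : R := prob [set w | x < X w].

Definition DY (Y : T -> R) : set R :=
  [set y | 0 < y /\ forall δ : R, 0 < δ ->
     0 < prob [set w | y - δ < Y w < y + δ]].

Definition cond_ratio (X Y : T -> R) (x y t : R) : R :=
  prob [set w | x < X w /\ y <= Y w < y + t] / prob [set w | y <= Y w < y + t].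

Definition cond_tail_exists (X Y : T -> R) (x y : R) : Prop :=
  (\forall t \near 0^'+, 0 < prob [set w | y <= Y w < y + t]) /\
  cvg (cond_ratio X Y x y @ 0^'+).

(* P(X > x | Y = y), meaningful when cond_tail_exists X Y x y *)
Definition cond_tail (X Y : T -> R) (x y : R) : R :=
  lim (cond_ratio X Y x y @ 0^'+).

Definition standing (X Y : T -> R) : Prop :=
  measurable_fun setT X /\ measurable_fun setT Y /\
  (forall x : R, 0 < tailF X x) /\ (forall w, 0 < Y w).

(* (X,Y) is CD with function s (s positive measurable function on (0,oo));
   the uniform convergence  sup_{y in D_Y} |..-1| -> 0  is written out. *)
Definition CD (X Y : T -> R) (s : R -> R) : Prop :=
  measurable_fun [set y : R | 0 < y] s /\
  (forall y, 0 < y -> 0 < s y) /\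
  (forall x y, DY Y y -> cond_tail_exists X Y x y) /\
  (forall eps : R, 0 < eps -> exists x0 : R, forall x, x0 < x ->
     forall y, DY Y y ->
       `| cond_tail X Y x y / (tailF X x * s y) - 1 | <= eps).

Definition indep (X Y : T -> R) : Prop :=
  forall A B : set R, measurable A -> measurable B ->
    P (X @^-1` A `&` Y @^-1` B) = (P (X @^-1` A) * P (Y @^-1` B))%E.

End CD.

(* Main.v *)
Require Import Defs.
From HB Require Import structures.
From mathcomp Require Import all_boot all_order all_algebra.
From mathcomp Require Import all_classical all_reals all_analysis.
Import Order.TTheory GRing.Theory Num.Theory.
Local Open Scope classical_set_scope.
Local Open Scope ring_scope.
From mathcomp Require Import ring lra measurable_realfun.
Import numFieldNormedType.Exports.
Lemma part1 {R : realType} {d : measure_display} {T : measurableType d}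
  (P : probability T R) (X Y : T -> R) (s : R -> R) :
  standing P X Y -> CD P X Y s -> indep P X Y -> forall y, DY P Y y -> s y = 1.
Proof.
move=> [mX [mY [Fpos Ypos]]] [ms [spos [ex unif]]] ind y Dy.
have y0 : 0 < y := Dy.1.
have sy0 := spos y y0.
have ct : forall x, cond_tail P X Y x y = tailF P X x.
  move=> x; have [ev _] := ex x y Dy.
  rewrite /cond_tail; apply: norm_cvg_lim.
  apply: cvg_near_cst; apply: filterS ev => t dpos.
  rewrite /cond_ratio.
  have E1 : [set w | x < X w /\ y <= Y w < y + t] = X @^-1` `]x, +oo[ `&` Y @^-1` `[y, y + t[.
    by apply/seteqP; split => w /=; rewrite !in_itv /= andbT.
  have E2 : [set w | y <= Y w < y + t] = Y @^-1` `[y, y + t[.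
    by apply/seteqP; split => w /=; rewrite !in_itv /=.
  have E3 : [set w | x < X w] = X @^-1` `]x, +oo[.
    by apply/seteqP; split => w /=; rewrite !in_itv /= andbT.
  rewrite E2 in dpos *; rewrite E1 /tailF E3 /prob ind //.
  have mA : measurable (X @^-1` `]x, +oo[) by rewrite -[X @^-1` _]setTI; apply: mX.
  have mB : measurable (Y @^-1` `[y, y + t[) by rewrite -[Y @^-1` _]setTI; apply: mY.
  rewrite fineM; try exact: fin_num_measure.
  by rewrite mulfK // gt_eqF.
have key : forall e, 0 < e -> `|(s y)^-1 - 1| <= e.
  move=> e e0; have [x0 Hx0] := unif e e0.
  have hx : x0 < x0 + 1 by rewrite ltrDl ltr01.
  have := Hx0 (x0 + 1) hx y Dy.
  by rewrite ct invfM mulrA mulfV ?mul1r // gt_eqF.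
have : (s y)^-1 - 1 = 0.
  apply/eqP; rewrite -normr_eq0; apply/negPn/negP => ne.
  have a0 : 0 < `|(s y)^-1 - 1| by rewrite normr_gt0 -normr_eq0.
  have := key _ (divr_gt0 a0 (ltr0n _ 2)).
  rewrite ler_pdivlMr // => h.
  have : `|(s y)^-1 - 1| * 1 < `|(s y)^-1 - 1| * 2%:R by rewrite ltr_pM2l // ltr1n.
  by rewrite mulr1 ltNge h.
by move/eqP; rewrite subr_eq0 invr_eq1 => /eqP.
Qed.

Section P2.
Context {R : realType}.
Definition Yc (w : R) : R := if w < 2^-1 then 1 else 2.
Definition Xc (w : R) : R :=
  if 3 / 4 <= w then - ln `|2 * w - 1| - 1 else - ln `|2 * w - 1|.

Lemma expN_le (x : R) : 1 <= x -> expR (- x) <= 2^-1.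
Proof.
move=> x1; apply: (le_trans (y := expR (-1))); first by rewrite ler_expR lerN2.
rewrite expRN lef_pV2 ?posrE ?expR_gt0 //.
by have := @expR_ge1Dx R 1; rewrite (_ : 1 + 1 = 2 :> R).
Qed.

Lemma ln2_le1 : ln (2 : R) <= 1.
Proof. by have := @le_ln1Dx R 1 ltac:(lra); rewrite (_ : 1 + 1 = 2 :> R). Qed.

Lemma Xchar (x w : R) : 1 <= x ->
  (x < Xc w) <-> (w != 2^-1 /\ `|2 * w - 1| < expR (- x)).
Proof.
move=> x1; have e2 := @expN_le x x1; have ep := expR_gt0 (- x).
rewrite /Xc; case: (leP (3 / 4) w) => hw.
  have a_ge : 2^-1 <= `|2 * w - 1|.
    by rewrite ger0_norm; lra.
  split; last by case=> _; lra.
  have : ln (2^-1 : R) <= ln `|2 * w - 1|.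
    by rewrite ler_ln ?posrE //; lra.
  rewrite lnV ?posrE // => h; have := ln2_le1; lra.
have [->|wn] := eqVneq w 2^-1.
  rewrite (_ : 2 * 2^-1 - 1 = 0 :> R); last by field.
  by rewrite normr0 ln0 // oppr0; split => [h|[h _]]; [lra|].
have a0 : 0 < `|2 * w - 1|.
  rewrite normr_gt0 subr_eq0; apply: contra wn => /eqP h.
  by apply/eqP; lra.
rewrite ltrNr -{1}(expRK (- x)) ltr_ln ?posrE //.
by split => [h|[]//]; split.
Qed.
Local Notation Up := (uniform_prob (@ltr01 R)).

Lemma UE (A : set R) : measurable A -> Up A = lebesgue_measure (A `&` `[0, 1]).
Proof.
move=> mA; rewrite /= /uniform_prob integral_uniform_pdf.
rewrite (eq_integral (fun _ => 1%:E)); last first.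
  move=> w; rewrite inE => -[_ /=]; rewrite in_itv /= /uniform_pdf => ->.
  by rewrite subr0 invr1.
by rewrite integral_cst ?mul1e //; apply: measurableI.
Qed.

Lemma probE A : prob Up A = fine (Up A).
Proof. by []. Qed.

Lemma Uitv (a b : R) : 0 <= a -> a <= b -> b <= 1 ->
  prob Up `]a, b[ = b - a.
Proof.
move=> a0 ab b1; rewrite probE UE // setIidl; last first.
  by move=> w /=; rewrite !in_itv /= => /andP[h1 h2]; apply/andP; split; lra.
rewrite lebesgue_measure_itv /= lte_fin.
case: ltP => h /=; first by [].
by rewrite /=; lra.
Qed.
Lemma mNL : measurable_fun setT (fun w : R => - ln `|2 * w - 1|).
Proof.
have m1 : measurable_fun setT (fun w : R => 2 * w - 1).
  apply: measurable_funB; last exact: measurable_cst.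
  apply: measurable_funM; [exact: measurable_cst | exact: measurable_id].
have m2 : measurable_fun setT (fun w : R => `|2 * w - 1|).
  exact: (measurableT_comp (@normr_measurable R setT) m1).
have m3 : measurable_fun setT (fun w : R => ln `|2 * w - 1|).
  exact: (measurableT_comp (@measurable_ln R) m2).
exact: (measurable_funN m3).
Qed.

Lemma mXc : measurable_fun setT Xc.
Proof.
rewrite /Xc; apply: measurable_fun_if => //.
- by apply: measurable_fun_ler; [exact: measurable_cst | exact: measurable_id].
- apply: measurable_funTS; apply: measurable_funB; [exact: mNL | exact: measurable_cst].
- by apply: measurable_funTS; exact: mNL.
Qed.

Lemma mYc : measurable_fun setT Yc.
Proof.
rewrite /Yc; apply: measurable_fun_if => //.
- by apply: measurable_fun_ltr; [exact: measurable_id | exact: measurable_cst].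
Qed.
Lemma pL : prob Up `]-oo, 2^-1[%classic = 2^-1.
Proof.
rewrite probE UE //.
have -> : `]-oo, 2^-1[%classic `&` `[0, 1]%classic = `[0, 2^-1[%classic :> set R.
  apply/seteqP; split => w /=; rewrite !in_itv /=.
    by move=> [h /andP[h1 h2]]; apply/andP; split; lra.
  by move=> /andP[h1 h2]; split; [|apply/andP; split]; lra.
rewrite lebesgue_measure_itv /= lte_fin.
by case: ltP => h /=; [rewrite subr0 | lra].
Qed.

Lemma pR : prob Up `[2^-1, +oo[%classic = 2^-1.
Proof.
rewrite probE UE //.
have -> : `[2^-1, +oo[%classic `&` `[0, 1]%classic = `[2^-1, 1]%classic :> set R.
  apply/seteqP; split => w /=; rewrite !in_itv /=.
    by move=> [h /andP[h1 h2]]; apply/andP; split; lra.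
  by move=> /andP[h1 h2]; split; [|apply/andP; split]; lra.
rewrite lebesgue_measure_itv /= lte_fin.
case: ltP => h /=; [|lra].
by rewrite /= ; field.
Qed.

Lemma mS (x : R) : measurable [set w : R | x < Xc w].
Proof.
have -> : [set w : R | x < Xc w] = Xc @^-1` `]x, +oo[%classic.
  by apply/seteqP; split => w /=; rewrite in_itv /= andbT.
by rewrite -[Xc @^-1` _]setTI; apply: mXc.
Qed.

Lemma pSL (x : R) : 1 <= x ->
  prob Up ([set w | x < Xc w] `&` `]-oo, 2^-1[%classic) = expR (- x) / 2.
Proof.
move=> x1; have e2 := @expN_le x x1; have ep := expR_gt0 (- x).
have -> : [set w | x < Xc w] `&` `]-oo, 2^-1[%classic = `]2^-1 - expR (- x) / 2, 2^-1[%classic :> set R.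
  apply/seteqP; split => w /=; rewrite !in_itv /=.
    move=> [/(@Xchar x w x1) [wn]] + h.
    rewrite ltr0_norm; last lra.
    by move=> h2; apply/andP; split; lra.
  move=> /andP[h1 h2]; split; last by [].
  apply/(@Xchar x w x1); split; first by rewrite lt_eqF.
  by rewrite ltr0_norm; lra.
by rewrite Uitv; lra.
Qed.

Lemma pSR (x : R) : 1 <= x ->
  prob Up ([set w | x < Xc w] `&` `[2^-1, +oo[%classic) = expR (- x) / 2.
Proof.
move=> x1; have e2 := @expN_le x x1; have ep := expR_gt0 (- x).
have -> : [set w | x < Xc w] `&` `[2^-1, +oo[%classic = `]2^-1, 2^-1 + expR (- x) / 2[%classic :> set R.
  apply/seteqP; split => w /=; rewrite !in_itv /=.
    move=> [/(@Xchar x w x1) [wn]]; rewrite andbT => + h.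
    have h' : 2^-1 < w by rewrite lt_neqAle eq_sym wn.
    rewrite gtr0_norm; last lra.
    by move=> h2; apply/andP; split; lra.
  move=> /andP[h1 h2]; split; last by rewrite andbT ltW.
  apply/(@Xchar x w x1); split; first by rewrite gt_eqF.
  by rewrite gtr0_norm; lra.
by rewrite Uitv; lra.
Qed.

Lemma pS (x : R) : 1 <= x -> prob Up [set w | x < Xc w] = expR (- x).
Proof.
move=> x1.
have -> : [set w | x < Xc w] = ([set w | x < Xc w] `&` `]-oo, 2^-1[%classic) `|`
    ([set w | x < Xc w] `&` `[2^-1, +oo[%classic).
  apply/seteqP; split => w /=; last by case=> -[].
  move=> h; rewrite !in_itv /= andbT.
  by case: (ltP w 2^-1) => hw; [left|right].
have m1 : measurable ([set w | x < Xc w] `&` `]-oo, 2^-1[%classic).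
  by apply: measurableI; [exact: mS|].
have m2 : measurable ([set w | x < Xc w] `&` `[2^-1, +oo[%classic).
  by apply: measurableI; [exact: mS|].
rewrite probE measureU //; last first.
  apply/seteqP; split => w //= [[_]]; rewrite !in_itv /= => h1 [_ h2]; lra.
rewrite fineD; [|exact: fin_num_measure|exact: fin_num_measure].
rewrite -!probE pSL // pSR //; lra.
Qed.
Lemma DYc (y : R) : DY Up Yc y -> y = 1 \/ y = 2.
Proof.
move=> [y0 H].
case: (eqVneq y 1) => [->|h1]; first by left.
case: (eqVneq y 2) => [->|h2]; first by right.
exfalso.
pose δ := Num.min `|y - 1| `|y - 2|.
have δ0 : 0 < δ by rewrite lt_min !normr_gt0 !subr_eq0 h1 h2.
have d1 : δ <= `|y - 1| by rewrite ge_min lexx.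
have d2 : δ <= `|y - 2| by rewrite ge_min lexx orbT.
have := H δ δ0.
have -> : [set w | y - δ < Yc w < y + δ] = set0.
  apply/seteqP; split => w //=; rewrite -ltr_distlC /Yc.
  case: ifP => _ h.
    by have := lt_le_trans h d1; rewrite ltxx.
  by have := lt_le_trans h d2; rewrite ltxx.
by rewrite probE measure0 ltxx.
Qed.

Lemma tail_pos (x : R) : 0 < tailF Up Xc x.
Proof.
rewrite /tailF.
have [x1|x1] := leP 1 x; first by rewrite pS // expR_gt0.
have h : prob Up [set w | 1 < Xc w] <= prob Up [set w | x < Xc w].
  have m1 := mS 1; have m2 := mS x.
  rewrite !probE; apply: fine_le; [exact: fin_num_measure|exact: fin_num_measure|].
  apply: le_measure; rewrite ?inE //.
  by move=> w /= hw; apply: lt_trans hw.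
by apply: lt_le_trans h; rewrite pS // expR_gt0.
Qed.

Lemma ct_gen (x y : R) (A : set R) :
  (\forall t \near 0^'+, [set w | y <= Yc w < y + t] = A) -> 0 < prob Up A ->
  cond_tail_exists Up Xc Yc x y /\
  cond_tail Up Xc Yc x y = prob Up ([set w | x < Xc w] `&` A) / prob Up A.
Proof.
move=> HA pA.
have Hr : \forall t \near 0^'+, cond_ratio Up Xc Yc x y t =
    prob Up ([set w | x < Xc w] `&` A) / prob Up A.
  apply: filterS HA => t HAt; rewrite /cond_ratio -HAt.
  by congr (prob _ _ / _); apply/seteqP; split => w /= [].
split; [split|].
- by apply: filterS HA => t ->.
- by apply: (cvgP (prob Up ([set w | x < Xc w] `&` A) / prob Up A)); apply: cvg_near_cst; exact: Hr.
- by apply: norm_cvg_lim; apply: cvg_near_cst; exact: Hr.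
Qed.

Lemma nearY1 : \forall t \near (0 : R)^'+,
  [set w | 1 <= Yc w < 1 + t] = `]-oo, 2^-1[%classic.
Proof.
near=> t.
have t0 : 0 < t by near: t; exact: nbhs_right_gt.
have t1 : t < 1 by near: t; exact: nbhs_right_lt.
apply/seteqP; split => w /=; rewrite in_itv /= /Yc; case: ltP => //= hw; lra.
Unshelve. all: by end_near.
Qed.

Lemma nearY2 : \forall t \near (0 : R)^'+,
  [set w | 2 <= Yc w < 2 + t] = `[2^-1, +oo[%classic.
Proof.
near=> t.
have t0 : 0 < t by near: t; exact: nbhs_right_gt.
apply/seteqP; split => w /=; rewrite in_itv /= /Yc; case: ltP => //= hw; lra.
Unshelve. all: by end_near.
Qed.
Lemma indepE (X Y : R -> R) (A B : set R) : indep Up X Y -> measurable A -> measurable B ->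
  Up (X @^-1` A `&` Y @^-1` B) = (Up (X @^-1` A) * Up (Y @^-1` B))%E.
Proof. by move=> H mA mB; apply: H. Qed.

Lemma not_indep : ~ indep Up Xc Yc.
Proof.
move=> H.
have mA : measurable (`]-oo, 0[%classic : set R) by exact: measurable_itv.
have mB : measurable (`]-oo, 3/2[%classic : set R) by exact: measurable_itv.
have mXA : measurable (Xc @^-1` `]-oo, 0[%classic).
  by rewrite -[Xc @^-1` _]setTI; apply: mXc.
have := @indepE Xc Yc _ _ H mA mB.
have EB : Yc @^-1` `]-oo, 3/2[%classic = `]-oo, 2^-1[%classic.
  apply/seteqP; split => w /=; rewrite !in_itv /= /Yc; case: (ltP w 2^-1) => hw h; lra.
have E0 : Up (Xc @^-1` `]-oo, 0[%classic `&` Yc @^-1` `]-oo, 3/2[%classic) = 0%E.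
  rewrite EB UE; last by apply: measurableI.
  have -> : (Xc @^-1` `]-oo, 0[%classic `&` `]-oo, 2^-1[%classic) `&` `[0, 1]%classic
      = set0 :> set R.
    apply/seteqP; split => w //=; rewrite !in_itv /= => -[[hx hw] /andP[w0 w1]]; exfalso.
    move: hx; rewrite /Xc; clear H EB mA mB mXA; case: (leP (3/4) w) => h hx; first lra.
    have : `|2 * w - 1| <= 1 by rewrite ler0_norm; lra.
    move/ln_le0.
    lra.
  by rewrite measure0.
have pXA : 4^-1 <= prob Up (Xc @^-1` `]-oo, 0[%classic).
  have <- : 1 - 3/4 = 4^-1 :> R by field.
  rewrite -(@Uitv (3/4) 1); try (clear H EB E0 mA mB mXA; lra).
  have m1 : measurable (`]3/4, 1[%classic : set R) by exact: measurable_itv.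
  rewrite !probE; apply: fine_le; [exact: fin_num_measure|exact: fin_num_measure|].
  apply: le_measure; rewrite ?inE //.
  move=> w /=; rewrite !in_itv /= => /andP[w1 w2]; clear H EB E0 mA mB mXA m1.
  rewrite /Xc; case: (leP (3/4) w) => h; last lra.
  rewrite gtr0_norm; last lra.
  have : ln (2^-1 : R) < ln (2 * w - 1) by rewrite ltr_ln ?posrE //; lra.
  rewrite lnV ?posrE // => h2; have := ln2_le1; lra.
rewrite E0 => /esym/eqP; rewrite mule_eq0 => /orP[] /eqP h0.
  by move: pXA; rewrite probE h0 /=; clear H EB E0 mA mB mXA h0; lra.
by move: pL; rewrite -EB probE h0 /=; clear H EB E0 mA mB mXA h0 pXA; lra.
Qed.
End P2.

Theorem proposition2p6 (R : realType) :
  (forall (d : measure_display) (T : measurableType d)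
          (P : probability T R) (X Y : T -> R) (s : R -> R),
      standing P X Y -> CD P X Y s -> indep P X Y ->
      forall y, DY P Y y -> s y = 1) /\
  (exists (d : measure_display) (T : measurableType d)
          (P : probability T R) (X Y : T -> R) (s : R -> R),
      standing P X Y /\ CD P X Y s /\
      (forall y, DY P Y y -> s y = 1) /\ ~ indep P X Y).
Proof.
split; first by move=> d T P X Y s; exact: part1.
exists _, _, (uniform_prob (@ltr01 R)), Xc, Yc, (fun _ => 1).
have pL0 : 0 < prob (uniform_prob (@ltr01 R)) `]-oo, 2^-1[%classic by rewrite pL.
have pR0 : 0 < prob (uniform_prob (@ltr01 R)) `[2^-1, +oo[%classic by rewrite pR.
split; [|split; [|split]].
- split; first exact: mXc.
  split; first exact: mYc.
  split; first exact: tail_pos.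
  by move=> w; rewrite /Yc; case: ifP.
- split; first exact: measurable_cst.
  split; first by [].
  split.
    move=> x y /DYc [->|->].
      exact: (ct_gen x 1 _ nearY1 pL0).1.
    exact: (ct_gen x 2 _ nearY2 pR0).1.
  move=> e e0; exists 1 => x x1 y /DYc [->|->].
    rewrite (ct_gen x 1 _ nearY1 pL0).2 (@pSL _ x (ltW x1)) pL /tailF (@pS _ x (ltW x1)).
    have ep := expR_gt0 (- x).
    have -> : expR (- x) / 2 / 2^-1 / (expR (- x) * 1) - 1 = 0 by field; lra.
    by rewrite normr0 ltW.
  rewrite (ct_gen x 2 _ nearY2 pR0).2 (@pSR _ x (ltW x1)) pR /tailF (@pS _ x (ltW x1)).
  have ep := expR_gt0 (- x).
  have -> : expR (- x) / 2 / 2^-1 / (expR (- x) * 1) - 1 = 0 by field; lra.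
  by rewrite normr0 ltW.
- by [].
- exact: not_indep.
Qed.
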